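(* Let $S_X,S_Y$ be finite nonempty action sets and $u_X,u_Y:S_X\times S_Y\to\mathbb{R}$ the stage-game payoff functions of $X$ and $Y$. There exists a zero-sum autocratic strategy for player $X$ (i.e., $u_X+u_Y\equiv0$ is enforceable) if and only if there exist $\tau_X^+,\tau_X^-\in\Delta(S_X)$ such that $u_X(\tau_X^+,s_Y)\ge-u_Y(\tau_X^+,s_Y)$ and $u_X(\tau_X^-,s_Y)\le-u_Y(\tau_X^-,s_Y)$ for all $s_Y\in S_Y$.
   Context: Two players $X,Y$ play a repeated game with finite action sets $S_X,S_Y$; $\Delta(S)$ denotes the probability distributions on $S$; functions on $S_X\times S_Y$ are extended to mixed actions in the first argument by $f(\tau_X,s_Y)=\mathbb{E}_{s_X\sim\tau_X}[f(s_X,s_Y)]$. Histories: $\mathcal{H}=\bigcup_{T\ge0}(S_X\times S_Y)^T$; behavioral strategies are maps $\sigma:\mathcal{H}\to\Delta(S)$; players independently draw actions each round from their strategies evaluated at the history of realized action pairs, with $\mathbb{E}_{\sigma_X,\sigma_Y}$ the expectation over the resulting play. For $\varphi:S_X\times S_Y\to\mathbb{R}$ and $\lambda\in[0,1)$, $\sigma_X$ is $(\varphi,\lambda)$-autocratic if for every behavioral strategy $\sigma_Y$, $\mathbb{E}_{\sigma_X,\sigma_Y}[(1-\lambda)\sum_{t\ge0}\lambda^t\varphi(s_X^t,s_Y^t)]=0$; it is $(\varphi,1)$-autocratic if for every $\sigma_Y$ the limit $\lim_{T\to\infty}\frac1{T+1}\sum_{t=0}^T\mathbb{E}_{\sigma_X,\sigma_Y}[\varphi(s_X^t,s_Y^t)]$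 exists and equals $0$. A zero-sum autocratic strategy is a behavioral strategy of $X$ that is $(u_X+u_Y,\lambda)$-autocratic for some $\lambda\in[0,1]$, i.e., enforces $\pi_X=-\pi_Y$ in expectation. *)

(* Defs.v *)
From mathcomp Require Import all_boot all_order all_algebra.
From mathcomp Require Import all_classical all_reals all_analysis.
Set Implicit Arguments. Unset Strict Implicit. Unset Printing Implicit Defensive.
Import Order.TTheory GRing.Theory Num.Theory.
Local Open Scope classical_set_scope.
Local Open Scope ring_scope.

Definition is_mixed {R : realType} {S : finType} (tau : S -> R) : Prop :=
  (forall s, 0 <= tau s) /\ \sum_(s : S) tau s = 1.

Definition mixed_payoff {R : realType} {SX SY : finType}
  (f : SX -> SY -> R) (tau : SX -> R) (sY : SY) : R :=
  \sum_(a : SX) tau a * f a sY.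

(* Histories: finite sequences of realized action pairs, in chronological
   order (the most recent pair is last). *)
Definition history (SX SY : finType) := seq (SX * SY).

Definition behavioral {R : realType} {SX SY S : finType}
  (sigma : history SX SY -> S -> R) : Prop :=
  forall h, is_mixed (sigma h).

(* stage_exp sX sY phi t h = expected value of phi at the round |h| + t,
   conditional on history h having been realized, when actions are drawn
   independently from sX and sY at each round. *)
Fixpoint stage_exp {R : realType} {SX SY : finType}
  (sX : history SX SY -> SX -> R) (sY : history SX SY -> SY -> R)
  (phi : SX -> SY -> R) (t : nat) (h : history SX SY) : R :=
  match t with
  | 0 => \sum_(a : SX) \sum_(b : SY) sX h a * sY h b * phi a b
  | t'.+1 => \sum_(a : SX) \sum_(b : SY)
               sX h a * sY h b * stage_exp sX sY phi t' (rcons h (a, b))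
  end.

Definition exp_stage {R : realType} {SX SY : finType}
  (sX : history SX SY -> SX -> R) (sY : history SX SY -> SY -> R)
  (phi : SX -> SY -> R) (t : nat) : R :=
  stage_exp sX sY phi t [::].

(* For lambda < 1 the expectation
   of the discounted sum is the sum of the discounted expectations (phi is
   bounded); we require the partial sums of this series to converge to 0.
   For lambda = 1 the Cesaro means of the stage expectations converge to 0. *)
Definition autocratic {R : realType} {SX SY : finType}
  (sX : history SX SY -> SX -> R) (phi : SX -> SY -> R) (lam : R) : Prop :=
  forall sY : history SX SY -> SY -> R, behavioral sY ->
    (lam < 1 ->
       (fun n : nat => \sum_(t < n) (1 - lam) * lam ^+ t * exp_stage sX sY phi t)
         @ \oo --> 0) /\
    (lam = 1 ->
       (fun T : nat => (T.+1%:R)^-1 * \sum_(t < T.+1) exp_stage sX sY phi t)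
         @ \oo --> 0).

Definition zero_sum_autocratic {R : realType} {SX SY : finType}
  (uX uY : SX -> SY -> R) (sX : history SX SY -> SX -> R) : Prop :=
  behavioral sX /\
  exists lam : R, 0 <= lam <= 1 /\ autocratic sX (fun a b => uX a b + uY a b) lam.

(* Main.v *)
Require Import Defs.
From mathcomp Require Import all_boot all_order all_algebra.
From mathcomp Require Import all_classical all_reals all_analysis.
From mathcomp Require Import ring lra.
Import Order.TTheory GRing.Theory Num.Theory.
Local Open Scope classical_set_scope.
Local Open Scope ring_scope.

Section Topo.
Variables (R : realType) (SX SY : finType).
Local Notation PT := {ptws SX -> R^o}.

Lemma cont_sum (T : topologicalType) (I : Type) (s : seq I) (F : I -> T -> R^o) :
  (forall i, continuous (F i)) -> continuous (fun x => \sum_(i <- s) F i x).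
Proof.
move=> hF; elim: s => [|i s IH].
  have -> : (fun x : T => \sum_(i <- [::]) F i x) = (fun _ => 0).
    by apply: funext => x; rewrite big_nil.
  exact: cst_continuous.
have -> : (fun x : T => \sum_(j <- i :: s) F j x) = (F i + (fun x => \sum_(j <- s) F j x)).
  by apply: funext => x; rewrite big_cons.
by move=> x; apply: continuousD; [exact: hF | exact: IH].
Qed.

Lemma cont_payoff (phi : SX -> SY -> R) b :
  continuous (fun tau : PT => mixed_payoff phi tau b : R^o).
Proof.
rewrite /mixed_payoff; apply: cont_sum => a x.
apply: (continuousM (s := fun tau : PT => tau a : R^o) (t := fun _ => phi a b)).
  exact: (@proj_continuous SX (fun _ => R^o) a).
exact: (@cst_continuous PT R^o (phi a b) x).
Qed.

Lemma simplex_compact :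
  compact [set tau : PT | is_mixed tau].
Proof.
have -> : [set tau : PT | is_mixed tau] =
  [set f : PT | forall i, [set` `[0%R, 1%R]%R] (f i)] `&`
  ((fun tau : PT => \sum_(s : SX) tau s : R^o) @^-1` [set 1%R]).
  apply/seteqP; split => tau /=.
    move=> [h0 h1]; split => //= i; rewrite in_itv /= h0 /= -h1.
    by rewrite (bigD1 i) //= lerDl sumr_ge0.
  by move=> [h0 h1]; split => // i; have := h0 i; rewrite in_itv /= => /andP[].
apply: (@compact_closedI PT).
  exact: (@tychonoff SX (fun _ => R^o) (fun _ => [set` `[0%R, 1%R]%R]) (fun _ => @segment_compact R 0 1)).
apply: preimage_closed; last exact: closed_eq.
move=> x _; apply: cont_sum => a; exact: (@proj_continuous SX (fun _ => R^o) a).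
Qed.

Lemma unif_neg (phi : SX -> SY -> R) :
  (forall tau, is_mixed tau -> exists b, mixed_payoff phi tau b < 0) ->
  exists2 c : R, 0 < c &
    forall tau, is_mixed tau -> exists b, mixed_payoff phi tau b <= - c.
Proof.
move=> H.
case: (pselect (exists tau : SX -> R, is_mixed tau)) => [[tau0 m0]|Hn]; last first.
  by exists 1 => // tau mt; exfalso; apply: Hn; exists tau.
pose f (tau : PT) : R^o := \sum_(b : SY) Num.max (- mixed_payoff phi tau b) 0.
have cf : continuous f.
  apply: cont_sum => b x.
  apply: (continuous_max (f := fun tau : PT => - mixed_payoff phi tau b : R^o)
                         (g := fun _ => 0)).
    by apply: continuousN; exact: cont_payoff.
  exact: (@cst_continuous PT R^o 0 x).
have cfA : {within [set tau : PT | is_mixed tau], continuous f}.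
  by apply: continuous_subspaceT.
have [c0 c0A minf] := @compact_EVT_min PT R f [set tau : PT | is_mixed tau]
   (ex_intro _ tau0 m0) (@simplex_compact) cfA.
have c0m : is_mixed c0 by move: c0A; rewrite inE.
have [b0 hb0] := H c0 c0m.
have Npos : (0 < #|SY|)%N by apply/card_gt0P; exists b0.
have NposR : (0 : R) < #|SY|%:R by rewrite ltr0n.
have m0p : 0 < f c0.
  rewrite /f (bigD1 b0) //=.
  have t1 : 0 < Num.max (- mixed_payoff phi c0 b0) 0 by rewrite lt_max oppr_gt0 hb0.
  have t2 : 0 <= \sum_(i | i != b0) Num.max (- mixed_payoff phi c0 i) 0.
    by apply: sumr_ge0 => i _; rewrite le_max lexx orbT.
  lra.
exists (f c0 / #|SY|%:R); first by apply: divr_gt0.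
move=> tau mt.
case: (pselect (exists b, mixed_payoff phi tau b <= - (f c0 / #|SY|%:R))) => // Hn.
exfalso.
have hall : forall b, Num.max (- mixed_payoff phi tau b) 0 < f c0 / #|SY|%:R.
  move=> b; rewrite gt_max divr_gt0 // andbT ltrNl ltNge; apply/negP => hb.
  by apply: Hn; exists b.
have : f tau < f c0.
  rewrite /f.
  have -> : \sum_(b : SY) Num.max (- mixed_payoff phi c0 b) 0 =
            \sum_(b : SY) (\sum_(b : SY) Num.max (- mixed_payoff phi c0 b) 0) / #|SY|%:R.
    rewrite sumr_const -[(_ / _) *+ _]mulr_natr mulfVK //.
    by rewrite gt_eqF.
  apply: ltr_sum => //.
  by apply/hasP; exists b0; rewrite ?mem_index_enum.
have := minf tau (mem_set mt).
move=> a b; have := lt_le_trans b a; by rewrite ltxx.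
Qed.
End Topo.

Section Game.
Variables (R : realType) (SX SY : finType).

Lemma sum_mixed2 (p : SX -> R) (q : SY -> R) :
  is_mixed p -> is_mixed q -> \sum_a \sum_b p a * q b = 1.
Proof.
move=> [_ hp] [_ hq].
under eq_bigr => a _ do rewrite -mulr_sumr hq mulr1.
exact: hp.
Qed.

Lemma convex_le (p : SX -> R) (q : SY -> R) (f : SX -> SY -> R) M :
  is_mixed p -> is_mixed q -> (forall a b, f a b <= M) ->
  \sum_a \sum_b p a * q b * f a b <= M.
Proof.
move=> mp mq hf.
apply: (@le_trans _ _ (\sum_a \sum_b p a * q b * M)).
  apply: ler_sum => a _; apply: ler_sum => b _; apply: ler_wpM2l => //.
  by apply: mulr_ge0; [case: mp | case: mq].
rewrite -[leRHS]mul1r -(sum_mixed2 p q mp mq) mulr_suml.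
by apply: ler_sum => a _; rewrite mulr_suml.
Qed.

Lemma convex_ge (p : SX -> R) (q : SY -> R) (f : SX -> SY -> R) M :
  is_mixed p -> is_mixed q -> (forall a b, M <= f a b) ->
  M <= \sum_a \sum_b p a * q b * f a b.
Proof.
move=> mp mq hf.
apply: (@le_trans _ _ (\sum_a \sum_b p a * q b * M)); last first.
  apply: ler_sum => a _; apply: ler_sum => b _; apply: ler_wpM2l => //.
  by apply: mulr_ge0; [case: mp | case: mq].
rewrite -[leLHS]mul1r -(sum_mixed2 p q mp mq) mulr_suml.
by apply: ler_sum => a _; rewrite mulr_suml.
Qed.

Lemma stage_le (sX : history SX SY -> SX -> R) sY phi c :
  behavioral sX -> behavioral sY ->
  (forall h, stage_exp sX sY phi 0 h <= c) -> forall t h, stage_exp sX sY phi t h <= c.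
Proof.
move=> bX bY h0; elim => [|t IH] h; first exact: h0.
by apply: convex_le; [exact: bX | exact: bY | move=> a b; exact: IH].
Qed.

Lemma stage_opp (sX : history SX SY -> SX -> R) sY phi t h :
  stage_exp sX sY (fun a b => - phi a b) t h = - stage_exp sX sY phi t h.
Proof.
elim: t h => [|t IH] h /=; rewrite -sumrN; apply: eq_bigr => a _;
  rewrite -sumrN; apply: eq_bigr => b _; by rewrite ?IH mulrN.
Qed.

Lemma autocratic_opp (sX : history SX SY -> SX -> R) phi lam :
  autocratic sX phi lam -> autocratic sX (fun a b => - phi a b) lam.
Proof.
move=> H sY bY; have [h1 h2] := H sY bY; split => hl.
  have -> : (fun n : nat => \sum_(t < n) (1 - lam) * lam ^+ t *
        exp_stage sX sY (fun a b => - phi a b) t) =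
        - (fun n : nat => \sum_(t < n) (1 - lam) * lam ^+ t * exp_stage sX sY phi t).
    apply: funext => n; rewrite opprfctE -sumrN; apply: eq_bigr => t _.
    by rewrite /exp_stage stage_opp mulrN.
  by have := cvgN (h1 hl); rewrite oppr0; apply.
have -> : (fun T : nat => (T.+1%:R)^-1 * \sum_(t < T.+1)
        exp_stage sX sY (fun a b => - phi a b) t) =
        - (fun T : nat => ((T.+1%:R)^-1 * \sum_(t < T.+1) exp_stage sX sY phi t)).
  apply: funext => n; rewrite opprfctE -mulrN -sumrN; congr (_ * _); apply: eq_bigr => t _.
  by rewrite /exp_stage stage_opp.
by have := cvgN (h2 hl); rewrite oppr0; apply.
Qed.

Lemma sum_dirac (b0 : SY) (x : R) (F : SY -> R) :
  \sum_b x * (if b == b0 then 1 else 0) * F b = x * F b0.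
Proof.
rewrite (bigD1 b0) //= eqxx mulr1 big1 ?addr0 // => i /negbTE ->.
by rewrite mulr0 mul0r.
Qed.

Lemma payoffN (phi : SX -> SY -> R) tau b :
  mixed_payoff (fun a b => - phi a b) tau b = - mixed_payoff phi tau b.
Proof. by rewrite /mixed_payoff -sumrN; apply: eq_bigr => a _; rewrite mulrN. Qed.

Lemma payoffD (f g : SX -> SY -> R) tau b :
  mixed_payoff (fun a b => f a b + g a b) tau b = mixed_payoff f tau b + mixed_payoff g tau b.
Proof. by rewrite /mixed_payoff -big_split; apply: eq_bigr => a _; rewrite mulrDr. Qed.

Lemma cvg_inv_bounded (w : nat -> R) M : (forall T, `|w T| <= M) ->
  (fun T : nat => (T.+1%:R)^-1 * w T) @ \oo --> 0.
Proof.
move=> hw; apply/cvgr0Pnorm_le => e e0.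
exists (Num.truncn (M / e)) => // T /= hT.
rewrite normrM normfV normr_nat ler_pdivrMl // (le_trans (hw T)) //.
have h1 := Num.Theory.truncnS_gt (M / e).
have h2 : ((Num.truncn (M / e)).+1%:R <= T.+1%:R :> R) by rewrite ler_nat.
have h3 : M / e < T.+1%:R by exact: lt_le_trans h1 h2.
by rewrite ltr_pdivrMr // in h3; apply: ltW.
Qed.

End Game.

Section Constr.
Variables (R : realType) (SX SY : finType) (phi : SX -> SY -> R) (tp tm : SX -> R).
Hypotheses (mp : is_mixed tp) (mm : is_mixed tm)
  (hp : forall b, 0 <= mixed_payoff phi tp b) (hm : forall b, mixed_payoff phi tm b <= 0).

Definition choosem (v : R) := if 0 <= v then tp else tm.
Definition Vh (h : history SX SY) : R :=
  foldl (fun v p => v - mixed_payoff phi (choosem v) p.2) 0 h.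
Definition sXc (h : history SX SY) := choosem (Vh h).

Lemma Vh_rcons h a b : Vh (rcons h (a, b)) = Vh h - mixed_payoff phi (sXc h) b.
Proof. by rewrite /Vh foldl_rcons. Qed.

Lemma sXc_beh : behavioral sXc.
Proof. by move=> h; rewrite /sXc /choosem; case: ifP. Qed.

Definition G0 : R := \sum_a \sum_b `|phi a b|.

Lemma G0_entry a b : `|phi a b| <= G0.
Proof.
rewrite /G0 (bigD1 a) //= (bigD1 b) //= -addrA lerDl.
apply: addr_ge0; apply: sumr_ge0 => i _ //.
exact: sumr_ge0.
Qed.

Lemma payoff_bound tau b : is_mixed tau -> `|mixed_payoff phi tau b| <= G0.
Proof.
move=> [t0 t1]; rewrite ler_norml; apply/andP; split.
  rewrite -[leLHS]mul1r -t1 mulr_suml; apply: ler_sum => a _.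
  apply: ler_wpM2l => //.
  by have /andP[] : (- G0 <= phi a b <= G0) by rewrite -ler_norml G0_entry.
rewrite -[leRHS]mul1r -t1 mulr_suml; apply: ler_sum => a _.
apply: ler_wpM2l => //.
by have /andP[] : (- G0 <= phi a b <= G0) by rewrite -ler_norml G0_entry.
Qed.

Lemma G0_ge0 : 0 <= G0.
Proof. by apply: sumr_ge0 => a _; apply: sumr_ge0. Qed.

Lemma Vh_bound h : `|Vh h| <= G0.
Proof.
elim/last_ind: h => [|h [a b] IH].
  by rewrite /Vh /= normr0 G0_ge0.
rewrite Vh_rcons /sXc /choosem.
move: IH; rewrite !ler_norml => /andP[l u].
case: ifP => hv.
  have := payoff_bound tp b mp; rewrite ler_norml => /andP[l' u'].
  have := hp b; lra.
have := payoff_bound tm b mm; rewrite ler_norml => /andP[l' u'].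
have := hm b; move/negbT: hv; rewrite -ltNge; lra.
Qed.

Variable sY : history SX SY -> SY -> R.
Hypothesis bY : behavioral sY.

Fixpoint W (n : nat) (h : history SX SY) : R :=
  match n with
  | 0 => Vh h
  | n'.+1 => \sum_a \sum_b sXc h a * sY h b * W n' (rcons h (a, b))
  end.

Lemma W_bound n h : `|W n h| <= G0.
Proof.
elim: n h => [|n IH] h; first exact: Vh_bound.
rewrite /= ler_norml; apply/andP; split.
  apply: convex_ge; [exact: sXc_beh | exact: bY | move=> a b].
  by have := IH (rcons h (a, b)); rewrite ler_norml => /andP[].
apply: convex_le; [exact: sXc_beh | exact: bY | move=> a b].
by have := IH (rcons h (a, b)); rewrite ler_norml => /andP[].
Qed.

Lemma stage0_eq h :
  stage_exp sXc sY phi 0 h = \sum_b sY h b * mixed_payoff phi (sXc h) b.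
Proof.
rewrite /= exchange_big; apply: eq_bigr => b _.
rewrite /mixed_payoff mulr_sumr; apply: eq_bigr => a _; ring.
Qed.

Lemma sum_stage n h :
  \sum_(t < n) stage_exp sXc sY phi t h = Vh h - W n h.
Proof.
elim: n h => [|n IH] h; first by rewrite big_ord0 /= subrr.
rewrite big_ord_recl.
have -> : \sum_(i < n) stage_exp sXc sY phi (bump 0 i) h =
   \sum_(i < n) \sum_a \sum_b sXc h a * sY h b * stage_exp sXc sY phi i (rcons h (a, b)).
  by apply: eq_bigr.
have -> : \sum_(i < n) \sum_a \sum_b sXc h a * sY h b * stage_exp sXc sY phi i (rcons h (a, b))
   = \sum_a \sum_b sXc h a * sY h b * (Vh h - mixed_payoff phi (sXc h) b
        - W n (rcons h (a, b))).
  rewrite exchange_big; apply: eq_bigr => a _; rewrite exchange_big; apply: eq_bigr => b _.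
  by rewrite -mulr_sumr IH Vh_rcons.
have split : forall (X : R) (g : SY -> R) (Z : SX -> SY -> R),
   \sum_a \sum_b sXc h a * sY h b * (X - g b - Z a b) =
   \sum_a \sum_b sXc h a * sY h b * X - \sum_a \sum_b sXc h a * sY h b * g b
   - \sum_a \sum_b sXc h a * sY h b * Z a b.
  move=> X g Z; rewrite -!sumrB; apply: eq_bigr => a _; rewrite -!sumrB.
  by apply: eq_bigr => b _; ring.
rewrite split /=.
have -> : \sum_a \sum_b sXc h a * sY h b * Vh h = Vh h.
  rewrite -[RHS]mul1r -(@sum_mixed2 R SX SY (sXc h) (sY h) (sXc_beh h) (bY h)) mulr_suml.
  by apply: eq_bigr => a _; rewrite mulr_suml.
have -> : \sum_a \sum_b sXc h a * sY h b * mixed_payoff phi (sXc h) b =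
          stage_exp sXc sY phi 0 h.
  rewrite stage0_eq exchange_big; apply: eq_bigr => b _.
  have [_ s1] := sXc_beh h.
  rewrite -[RHS]mul1r -s1 mulr_suml; apply: eq_bigr => a _; ring.
rewrite /=; ring.
Qed.

End Constr.

Lemma key_tp (R : realType) (SX SY : finType) (sX : history SX SY -> SX -> R)
  (phi : SX -> SY -> R) (lam : R) :
  behavioral sX -> 0 <= lam <= 1 -> autocratic sX phi lam ->
  exists tp, is_mixed tp /\ forall b, 0 <= mixed_payoff phi tp b.
Proof.
move=> bX /andP[l0 l1] HA.
case: (pselect (exists tp, is_mixed tp /\ forall b, 0 <= mixed_payoff phi tp b)) => // Hn.
exfalso.
have H1 : forall tau, is_mixed tau -> exists b, mixed_payoff phi tau b < 0.
  move=> tau mt.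
  case: (pselect (exists b, mixed_payoff phi tau b < 0)) => // Hb; exfalso.
  apply: Hn; exists tau; split => // b; rewrite leNgt; apply/negP => hb.
  by apply: Hb; exists b.
have [c c0 Hc] := @unif_neg R SX SY phi H1.
have ex : forall h, exists b, mixed_payoff phi (sX h) b <= - c.
  by move=> h; apply: Hc; exact: bX.
pose bh h := xchoose (ex h).
pose sY h b : R := if b == bh h then 1 else 0.
have bY : behavioral sY.
  move=> h; split.
    by move=> b; rewrite /sY; case: ifP.
  rewrite (bigD1 (bh h)) //= /sY eqxx big1 ?addr0 // => i /negbTE ->.
  by [].
have base : forall h, stage_exp sX sY phi 0 h <= - c.
  move=> h; rewrite /=.
  under eq_bigr => a _ do rewrite (@sum_dirac R SY (bh h) (sX h a) (phi a)).
  exact: (xchooseP (ex h)).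
have all := @stage_le R SX SY sX sY phi (- c) bX bY base.
have [hl|hl] : lam < 1 \/ lam = 1.
  by move: l1; rewrite le_eqVlt => /orP[/eqP->|->]; [right|left].
  have cv := (HA sY bY).1 hl.
  have ev : \forall n \near \oo,
      \sum_(t < n) (1 - lam) * lam ^+ t * exp_stage sX sY phi t <= - ((1 - lam) * c).
    exists 1%N => // n /= hn.
    case: n hn => // m _.
    rewrite big_ord_recl /= expr0 mulr1.
    have t1 : (1 - lam) * exp_stage sX sY phi 0 <= (1 - lam) * (- c).
      by apply: ler_wpM2l; [lra | exact: all].
    have t2 : \sum_(i < m) (1 - lam) * lam ^+ (bump 0 i) * exp_stage sX sY phi (bump 0 i) <= 0.
      apply: sumr_le0 => i _; apply: mulr_ge0_le0.
        by apply: mulr_ge0; [lra | exact: exprn_ge0].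
      by have := all (bump 0 i) [::]; rewrite /exp_stage; lra.
    have t3 : (1 - lam) * (- c) = - ((1 - lam) * c) by ring.
    lra.
  have := cvgr_to_le cv ev.
  have : 0 < (1 - lam) * c by apply: mulr_gt0; lra.
  move=> h1 h2; have h3 : 0 <= - ((1 - lam) * c) by apply: h2; exact: _.
  lra.
have cv := (HA sY bY).2 hl.
have ev : \forall n \near \oo,
    (n.+1%:R)^-1 * \sum_(t < n.+1) exp_stage sX sY phi t <= - c.
  exists 0%N => // n /= _.
  have s1 : \sum_(t < n.+1) exp_stage sX sY phi t <= \sum_(t < n.+1) (- c).
    by apply: ler_sum => t _; exact: all.
  rewrite sumr_const card_ord in s1.
  have np : (0 : R) < n.+1%:R by rewrite ltr0n.
  rewrite -(ler_pM2l np) mulrA mulfV ?gt_eqF // mul1r.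
  by rewrite -mulr_natl in s1.
have h3 : 0 <= - c by apply: (cvgr_to_le cv ev); exact: _.
lra.
Qed.

Theorem proposition13 (R : realType) (SX SY : finType)
  (uX uY : SX -> SY -> R)
  (hX : (0 < #|SX|)%N) (hY : (0 < #|SY|)%N) :
  (exists sX : history SX SY -> SX -> R, zero_sum_autocratic uX uY sX) <->
  (exists tp tm : SX -> R, is_mixed tp /\ is_mixed tm /\
     forall sY : SY,
       - mixed_payoff uY tp sY <= mixed_payoff uX tp sY /\
       mixed_payoff uX tm sY <= - mixed_payoff uY tm sY).
Proof.
split.
  move=> [sX [bX [lam [hl HA]]]].
  have [tp [mp hp]] := @key_tp _ _ _ _ _ _ bX hl HA.
  have [tm [mm hm]] := @key_tp _ _ _ _ _ _ bX hl (@autocratic_opp _ _ _ _ _ _ HA).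
  exists tp, tm; split => //; split => // b.
  have := hp b; have := hm b.
  rewrite payoffN !payoffD.
  move=> h1 h2; split; lra.
move=> [tp [tm [mp [mm H]]]].
pose phi := fun a b => uX a b + uY a b.
have hp : forall b, 0 <= mixed_payoff phi tp b.
  by move=> b; rewrite payoffD; have [h1 _] := H b; lra.
have hm : forall b, mixed_payoff phi tm b <= 0.
  by move=> b; rewrite payoffD; have [_ h2] := H b; lra.
exists (sXc R SX SY phi tp tm); split; first exact: (@sXc_beh R SX SY phi tp tm mp mm).
exists 1; split; first by rewrite ler01 lexx.
move=> sY bY; split => hl; first by rewrite ltxx in hl.
have -> : (fun T : nat => (T.+1%:R)^-1 * \sum_(t < T.+1)
     exp_stage (sXc R SX SY phi tp tm) sY (fun a b => uX a b + uY a b) t) =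
   (fun T : nat => (T.+1%:R)^-1 * (0 - W R SX SY phi tp tm sY T.+1 [::])).
  apply: funext => T; rewrite /exp_stage.
  by rewrite (@sum_stage R SX SY phi tp tm mp mm sY bY) /Vh.
apply: (@cvg_inv_bounded R _ (G0 R SX SY phi)) => T.
by rewrite sub0r normrN (@W_bound R SX SY phi tp tm mp mm hp hm sY bY).
Qed.
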